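(* Let $\Omega_{AB}$ be a joint state space with $\Omega_A\otimes_{\min}\Omega_B\subseteq\Omega_{AB}\subseteq\Omega_A\otimes_{\max}\Omega_B$. Consider a dense coding protocol with initial state $\phi\in\Omega_{AB}$, message distribution $p_x$ and allowed local transformations $T_x$ on $A$, in which Bob's decoding measurement has effects of the form $$E_{y_1,y_2}=\sum_z q_z\, e^{(z)}_{y_1}\otimes f^{(z)}_{y_2},$$ where $\{q_z\}$ is a probability distribution and, for each $z$, $\{e^{(z)}_{y_1}\}_{y_1}\subset\mathcal E_A$ with $\sum_{y_1}e^{(z)}_{y_1}=u_A$ and $\{f^{(z)}_{y_2}\}_{y_2}\subset\mathcal E_B$ with $\sum_{y_2}f^{(z)}_{y_2}=u_B$. Then the mutual information between the message $X$ and the outcome pair $(Y_1,Y_2)$ satisfies $I(X:Y_1Y_2)\le\chi_C(\Omega_A)$. In particular no such protocol achieves superdense coding.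
   Context: Single systems: $\Omega_A\subset\mathbb R^{n_A+1}$, $\Omega_B\subset\mathbb R^{n_B+1}$ are GPT state spaces of the form $\{(1,r)^{\mathrm t}: r\in\mathcal R\}$ with $\mathcal R$ compact convex, unit effects $u_A,u_B=(1,\mathbf 0)^{\mathrm t}$, effect sets $\mathcal E_A=\{e:0\le e\cdot\omega\le1\ \forall\omega\in\Omega_A\}$ (similarly $\mathcal E_B$). Bipartite states are real $(n_A+1)\times(n_B+1)$ matrices, identified with $\mathbb R^{n_A+1}\otimes\mathbb R^{n_B+1}$ via $v\otimes w=vw^{\mathrm t}$, inner product $X\cdot Y=\mathrm{Tr}(X^{\mathrm t}Y)$. $\Omega_A\otimes_{\min}\Omega_B$ is the convex hull of product states $\omega_A\otimes\omega_B$; $\Omega_A\otimes_{\max}\Omega_B=\{\phi:(u_A\otimes u_B)\cdot\phi=1,\ (e\otimes f)\cdot\phi\ge0\ \forall e\in\mathcal E_A,f\in\mathcal E_B\}$. $\Omega_{AB}$ is closed and convex; $\mathcal E_{AB}=\{E:0\le E\cdot\phi\le1\ \forall\phi\in\Omega_{AB}\}$. An allowed local transformation on $A$ is a linear map $T$ with $T\Omega_A\subseteq\Omega_A$ and $T\phi\in\Omega_{AB}$ for all $\phi\in\Omega_{AB}$. In the dense coding protocol, outcome probabilities are $p(y_1,y_2|x)=E_{y_1,y_2}\cdot(T_x\phi)$. Classical capacity $\chi_C(\Omega_A)$: supremum of $I(X:Y)$ over finite message distributions, states $\omega_x\in\Omega_A$ and measurements $\{e_y\}\subset\mathcal E_A$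 ($\sum_y e_y=u_A$) with $p(y|x)=e_y\cdot\omega_x$. Superdense coding means $I(X:Y)>\chi_C(\Omega_A)$. *)

(* Defs.v *)
From Stdlib Require Import Reals.
From mathcomp Require Import all_boot.
Set Implicit Arguments. Unset Strict Implicit. Unset Printing Implicit Defensive.
Local Open Scope R_scope.

(* vectors of R^{n+1}; index ord0 is the "1" coordinate *)
Definition vec (n : nat) := 'I_n.+1 -> R.
(* bipartite states: real (nA+1) x (nB+1) matrices *)
Definition mat (nA nB : nat) := 'I_nA.+1 -> 'I_nB.+1 -> R.
Definition lmap (n : nat) := 'I_n.+1 -> 'I_n.+1 -> R.

Definition dotv (n : nat) (u v : vec n) : R :=
  \big[Rplus/0]_(i < n.+1) (u i * v i).

Definition dotm (nA nB : nat) (X Y : mat nA nB) : R :=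
  \big[Rplus/0]_(i < nA.+1) \big[Rplus/0]_(j < nB.+1) (X i j * Y i j).

Definition tens (nA nB : nat) (v : vec nA) (w : vec nB) : mat nA nB :=
  fun i j => v i * w j.

Definition unitv (n : nat) : vec n := fun i => if i == ord0 then 1 else 0.
Arguments unitv n i : clear implicits.

Definition seq_closed (I : Type) (S : (I -> R) -> Prop) : Prop :=
  forall (s : nat -> I -> R) (l : I -> R),
    (forall k, S (s k)) -> (forall i, Un_cv (fun k => s k i) (l i)) -> S l.

Definition bounded_set (I : Type) (S : (I -> R) -> Prop) : Prop :=
  exists M : R, forall v, S v -> forall i, Rabs (v i) <= M.

(* compact subset of R^I (I finite): closed and bounded (Heine-Borel) *)
Definition compact_set (I : Type) (S : (I -> R) -> Prop) : Prop :=
  seq_closed S /\ bounded_set S.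

Definition convex_set (I : Type) (S : (I -> R) -> Prop) : Prop :=
  forall u v t, S u -> S v -> 0 <= t <= 1 -> S (fun i => t * u i + (1 - t) * v i).

Definition closed_mat (nA nB : nat) (S : mat nA nB -> Prop) : Prop :=
  forall (s : nat -> mat nA nB) (l : mat nA nB),
    (forall k, S (s k)) -> (forall i j, Un_cv (fun k => s k i j) (l i j)) -> S l.

Definition convex_mat (nA nB : nat) (S : mat nA nB -> Prop) : Prop :=
  forall u v t, S u -> S v -> 0 <= t <= 1 ->
    S (fun i j => t * u i j + (1 - t) * v i j).

Definition state_space (n : nat) (Om : vec n -> Prop) : Prop :=
  exists Rset : ('I_n -> R) -> Prop,
    compact_set Rset /\ convex_set Rset /\ (exists r, Rset r) /\
    forall w : vec n, Om w <-> (w ord0 = 1 /\ Rset (fun i => w (lift ord0 i))).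

Definition effect (n : nat) (Om : vec n -> Prop) (e : vec n) : Prop :=
  forall w, Om w -> 0 <= dotv e w <= 1.

Definition measurement (n : nat) (Om : vec n -> Prop) (Y : finType) (e : Y -> vec n) : Prop :=
  (forall y, effect Om (e y)) /\
  (forall i, \big[Rplus/0]_(y : Y) e y i = unitv n i).

Definition min_tensor (nA nB : nat) (OmA : vec nA -> Prop) (OmB : vec nB -> Prop)
  (phi : mat nA nB) : Prop :=
  exists (K : nat) (lam : 'I_K -> R) (a : 'I_K -> vec nA) (b : 'I_K -> vec nB),
    (forall k, 0 <= lam k) /\ \big[Rplus/0]_(k < K) lam k = 1 /\
    (forall k, OmA (a k)) /\ (forall k, OmB (b k)) /\
    forall i j, phi i j = \big[Rplus/0]_(k < K) (lam k * tens (a k) (b k) i j).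

Definition max_tensor (nA nB : nat) (OmA : vec nA -> Prop) (OmB : vec nB -> Prop)
  (phi : mat nA nB) : Prop :=
  dotm (tens (unitv nA) (unitv nB)) phi = 1 /\
  forall e f, effect OmA e -> effect OmB f -> 0 <= dotm (tens e f) phi.

(* action of T on A and of T (x) id on AB *)
Definition applyv (n : nat) (T : lmap n) (v : vec n) : vec n :=
  fun i => \big[Rplus/0]_(k < n.+1) (T i k * v k).
Definition applyA (nA nB : nat) (T : lmap nA) (phi : mat nA nB) : mat nA nB :=
  fun i j => \big[Rplus/0]_(k < nA.+1) (T i k * phi k j).

Definition allowed_local (nA nB : nat) (OmA : vec nA -> Prop) (OmAB : mat nA nB -> Prop)
  (T : lmap nA) : Prop :=
  (forall w, OmA w -> OmA (applyv T w)) /\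
  (forall phi, OmAB phi -> OmAB (applyA T phi)).

Definition prob_dist (X : finType) (p : X -> R) : Prop :=
  (forall x, 0 <= p x) /\ \big[Rplus/0]_(x : X) p x = 1.

Definition log2 (x : R) : R := ln x / ln 2.

(* I(X:Y) for input distribution p and channel W(y|x); 0 log 0 = 0 *)
Definition mutual_info (X Y : finType) (p : X -> R) (W : X -> Y -> R) : R :=
  \big[Rplus/0]_(x : X) \big[Rplus/0]_(y : Y)
    (let pxy := p x * W x y in
     let py := \big[Rplus/0]_(x' : X) (p x' * W x' y) in
     if Req_EM_T pxy 0 then 0 else pxy * log2 (pxy / (p x * py))).

(* the set of mutual informations achievable by classical encodings in Om;
   chi_C(Om) is its supremum *)
Definition classical_rates (n : nat) (Om : vec n -> Prop) (r : R) : Prop :=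
  exists (K L : nat) (p : 'I_K -> R) (om : 'I_K -> vec n) (e : 'I_L -> vec n),
    prob_dist p /\ (forall x, Om (om x)) /\ measurement Om e /\
    r = mutual_info p (fun x y => dotv (e y) (om x)).

Definition decoding (nA nB : nat) (Z Y1 Y2 : finType) (q : Z -> R)
  (e : Z -> Y1 -> vec nA) (f : Z -> Y2 -> vec nB) (y1 : Y1) (y2 : Y2) : mat nA nB :=
  fun i j => \big[Rplus/0]_(z : Z) (q z * tens (e z y1) (f z y2) i j).

(* Main.v *)
Require Import Defs.
From Stdlib Require Import Reals.
From mathcomp Require Import all_boot.
From Stdlib Require Import Lra Psatz Classical ClassicalEpsilon FunctionalExtensionality.
From HB Require Import structures.
Local Open Scope R_scope.

HB.instance Definition _ := Monoid.isComLaw.Build R 0 Rplus (fun x y z => esym (Rplus_assoc x y z)) Rplus_comm Rplus_0_l.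
HB.instance Definition _ := Monoid.isMulLaw.Build R 0 Rmult Rmult_0_l Rmult_0_r.
HB.instance Definition _ := Monoid.isAddLaw.Build R Rmult Rplus Rmult_plus_distr_r Rmult_plus_distr_l.


Lemma sum_le (I : finType) (F G : I -> R) :
  (forall i, F i <= G i) -> \big[Rplus/0]_(i : I) F i <= \big[Rplus/0]_(i : I) G i.
Proof.
move=> H; apply: (big_ind2 (fun x y => x <= y)) => //; first lra.
move=> ? ? ? ? ? ?; lra.
Qed.

Lemma sum_ge0 (I : finType) (F : I -> R) :
  (forall i, 0 <= F i) -> 0 <= \big[Rplus/0]_(i : I) F i.
Proof.
move=> H; apply: (big_ind (fun x => 0 <= x)) => //; first lra.
move=> ? ? ? ?; lra.
Qed.

Lemma sum_term (I : finType) (F : I -> R) j :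
  (forall i, 0 <= F i) -> F j <= \big[Rplus/0]_(i : I) F i.
Proof.
move=> H; rewrite (bigD1 j) //=.
have := @sum_ge0 I (fun i => if i != j then F i else 0).
rewrite -big_mkcond /=. move=> h; have : 0 <= \big[Rplus/0]_(i | i != j) F i.
  by apply: h => i; case: (i != j) => //; lra.
lra.
Qed.

Lemma sum_scal (I : finType) (F : I -> R) a :
  \big[Rplus/0]_(i : I) (a * F i) = a * \big[Rplus/0]_(i : I) F i.
Proof. by rewrite big_distrr. Qed.

Lemma sum_add (I : finType) (F G : I -> R) :
  \big[Rplus/0]_(i : I) (F i + G i) = \big[Rplus/0]_(i : I) F i + \big[Rplus/0]_(i : I) G i.
Proof. by rewrite big_split. Qed.

Lemma sum_ext (I : finType) (F G : I -> R) :
  (forall i, F i = G i) -> \big[Rplus/0]_(i : I) F i = \big[Rplus/0]_(i : I) G i.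
Proof. by move=> H; apply: eq_bigr => i _; apply H. Qed.

Lemma sum_zero (I : finType) : \big[Rplus/0]_(i : I) 0 = 0.
Proof. by rewrite big1. Qed.

Lemma sum_delta n (v : vec n) j :
  \big[Rplus/0]_(k < n.+1) ((if k == j then 1 else 0) * v k) = v j.
Proof.
rewrite (bigD1 j) //= eqxx big1 ?Rplus_0_r ?Rmult_1_l // => k /negbTE ->; ring.
Qed.

Lemma abs_bnd x M : Rabs x <= M -> -M <= x <= M.
Proof. case: (Rcase_abs x) => h; [rewrite Rabs_left // | rewrite Rabs_right //]; lra. Qed.

Lemma ln_le x : 0 < x -> ln x <= x - 1.
Proof.
move=> hx; have [y ->] := ln_exists x hx; rewrite ln_exp.
case: (Req_dec y 0) => [->|hy]; first (rewrite exp_0; lra).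
have := exp_ineq1 y hy; lra.
Qed.

Lemma sum_sub (I : finType) (F G : I -> R) :
  \big[Rplus/0]_(i : I) (F i - G i) = \big[Rplus/0]_(i : I) F i - \big[Rplus/0]_(i : I) G i.
Proof.
rewrite (@sum_ext _ _ (fun i => F i + (-1) * G i)); last by move=> i; ring.
rewrite sum_add sum_scal; ring.
Qed.

Lemma sum_lin3 (I : finType) (F G H : I -> R) x y :
  \big[Rplus/0]_(i : I) (F i + x * G i + y * H i) =
  \big[Rplus/0]_(i : I) F i + x * \big[Rplus/0]_(i : I) G i + y * \big[Rplus/0]_(i : I) H i.
Proof. by rewrite !sum_add !sum_scal. Qed.

Lemma arith1 X Y Z U V T0 D0 : D0 <= X + (-2*T0)*U + T0^2 * Z -> X < D0 + Y ->
  T0^2*Z <= T0^2*V -> Y = T0*D0/2 -> 0 < T0 -> 2*T0*U < T0*(D0/2 + T0*V).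
Proof. move=> *; nra. Qed.

Lemma sep n (Om : vec n -> Prop) : state_space Om -> forall w : vec n, w ord0 = 1 ->
  (forall e, effect Om e -> 0 <= dotv e w) -> Om w.
Proof.
move=> [K [[Kcl [M KM]] [Kcv [[s0 Ks0] HK]]]] w w0 Hpos.
apply/HK; split => //.
set r := (fun i => w (lift ord0 i)).
apply: NNPP => Kr.
pose dist2 (s : 'I_n -> R) := \big[Rplus/0]_(i < n) (s i - r i)^2.
have d2ge0 s : 0 <= dist2 s by apply: sum_ge0 => i; apply: pow2_ge_0.
pose E := fun x => exists s, K s /\ x = - dist2 s.
have [m [Hub Hl]] : {m | is_lub E m}.
  apply: completeness; last by exists (- dist2 s0), s0.
  exists 0 => x [s [_ ->]]; have := d2ge0 s; lra.
pose d := - m.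
have Hd1 s : K s -> d <= dist2 s.
  move=> Ks; have := Hub (- dist2 s) (ex_intro _ s (conj Ks erefl)); rewrite /d; lra.
have Hd2 eps : 0 < eps -> exists s, K s /\ dist2 s < d + eps.
  move=> he; apply: NNPP => hn.
  have : m <= m - eps.
    apply: Hl => x [s [Ks ->]].
    have : ~ (dist2 s < d + eps) by move=> h; apply: hn; exists s.
    rewrite /d; lra.
  lra.
have Hd0 : 0 <= d.
  have : m <= 0 by apply: Hl => x [s [_ ->]]; have := d2ge0 s; lra.
  rewrite /d; lra.
have dpos : 0 < d.
  case: (Rle_lt_or_eq_dec _ _ Hd0) => // d0; exfalso; apply: Kr.
  have Hs k : exists s, K s /\ dist2 s < / INR k.+1.
    have hk : 0 < / INR k.+1 by apply: Rinv_0_lt_compat; apply: lt_0_INR; lia.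
    have [s [Ks Hs]] := Hd2 _ hk; exists s; split => //; lra.
  pose sq k := proj1_sig (constructive_indefinite_description _ (Hs k)).
  have Hsq k : K (sq k) /\ dist2 (sq k) < / INR k.+1 :=
    proj2_sig (constructive_indefinite_description _ (Hs k)).
  apply: (Kcl sq r); first by move=> k; case: (Hsq k).
  move=> i eps he.
  have [N HN] := INR_archimed (eps*eps) 1 ltac:(nra).
  exists N => k hk; rewrite /R_dist.
  have hterm : (sq k i - r i)^2 <= dist2 (sq k) := @sum_term _ (fun j => (sq k j - r j)^2) i (fun j => pow2_ge_0 _).
  case: (Hsq k) => _ h2.
  have hk' : INR N <= INR k.+1 by apply le_INR; lia.
  have hK1 : 0 < INR k.+1 by apply: lt_0_INR; lia.
  have h3 : / INR k.+1 < eps * eps.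
    have e1 : / INR k.+1 * (INR k.+1 * (eps*eps)) = eps * eps by field; lra.
    have h4 : 1 < INR k.+1 * (eps * eps) by nra.
    have h5 : 0 < / INR k.+1 by apply Rinv_0_lt_compat.
    nra.
  have h6 : (sq k i - r i)^2 < eps * eps by lra.
  apply: Rabs_def1; nra.
pose D2 := \big[Rplus/0]_(i < n) (2*M)^2.
have HD s s' : K s -> K s' -> \big[Rplus/0]_(i<n) (s i - s' i)^2 <= D2.
  move=> hs hs'; apply: sum_le => i.
  have := abs_bnd _ _ (KM s hs i); have := abs_bnd _ _ (KM s' hs' i); nra.
have D2ge0 : 0 <= D2 by apply sum_ge0 => i; apply pow2_ge_0.
pose t := d / (2 * (D2 + d)).
have e1 : t * (2*(D2+d)) = d by rewrite /t; field; lra.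
have tpos : 0 < t by rewrite /t; apply Rdiv_lt_0_compat; lra.
have tle : t <= 1/2 by nra.
have tD2 : t * D2 <= d / 2 by nra.
pose delta := t * d / 2.
have [s' [Ks' Hs']] := Hd2 delta ltac:(rewrite /delta; nra).
pose a i := r i - s' i.
pose A (s : 'I_n -> R) := \big[Rplus/0]_(i<n) (a i * s i).
have HS s : K s -> A s - A s' < d/2.
  move=> Ks.
  pose st := fun i => t * s i + (1 - t) * s' i.
  have Kst : K st by apply: Kcv => //; lra.
  have h1 := Hd1 _ Kst.
  have eq1 : dist2 st = dist2 s' + (-2 * t) * (A s - A s') + t^2 * \big[Rplus/0]_(i<n) (s i - s' i)^2.
    rewrite /dist2 /A -sum_sub -sum_lin3; apply: sum_ext => i; rewrite /st /a; ring.
  have := HD s s' Ks Ks'.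
  set S := A s - A s'; set Q := \big[Rplus/0]_(i<n) (s i - s' i)^2 => hQ.
  have hq : t^2 * Q <= t^2 * D2 by apply Rmult_le_compat_l => //; nra.
  rewrite eq1 in h1.
  have h2 : 2*t*S < t*(d/2 + t*D2).
    have hdel : delta = t * d / 2 by [].
    exact: (arith1 _ _ _ _ _ _ _ h1 Hs' hq hdel tpos).
  have h3 : 2*S < d/2 + t*D2.
    apply: (Rmult_lt_reg_l t) => //; nra.
  lra.
have HA : A r - A s' = dist2 s'.
  rewrite /A -sum_sub; apply: sum_ext => i; rewrite /a; ring.
pose beta := A r - d/2.
pose B0 := Rabs beta + \big[Rplus/0]_(i<n) (Rabs (a i) * M).
have HB s : K s -> beta - A s <= B0.
  move=> Ks.
  have : - A s <= \big[Rplus/0]_(i<n) (Rabs (a i) * M).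
    rewrite /A -(Rmult_1_l (\big[Rplus/0]_(i<n) (a i * s i))) Ropp_mult_distr_l -sum_scal.
    apply: sum_le => i.
    have h1 := KM s Ks i.
    have h2 : -1 * (a i * s i) <= Rabs (a i * s i).
      rewrite -Ropp_mult_distr_l Rmult_1_l -Rabs_Ropp; apply Rle_abs.
    rewrite Rabs_mult in h2.
    have := Rabs_pos (a i); nra.
  have := Rle_abs beta; rewrite /B0; lra.
have Hgt s : K s -> 0 < beta - A s.
  move=> Ks; have := HS s Ks; have := Hd1 s' Ks'; rewrite /beta; lra.
have B0ge0 : 0 <= B0.
  have := HB s0 Ks0; have := Hgt s0 Ks0; lra.
pose c := / (B0 + 1).
have cpos : 0 < c by apply: Rinv_0_lt_compat; lra.
have cB0 : c * B0 < 1.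
  have : c * (B0 + 1) = 1 by rewrite /c; field; lra.
  lra.
pose e : vec n := fun j => match unlift ord0 j with None => c * beta | Some i => - (c * a i) end.
have He (w' : vec n) : dotv e w' = c * beta * w' ord0 - c * A (fun i => w' (lift ord0 i)).
  rewrite /dotv big_ord_recl /e unlift_none.
  under eq_bigr do rewrite liftK.
  rewrite /A -sum_scal. congr (_ + _).
  rewrite -(Rmult_1_l (\big[Rplus/0]_(i<n) (c * (a i * w' (lift ord0 i))))) Ropp_mult_distr_l -sum_scal.
  apply: sum_ext => i; ring.
have Heff : effect Om e.
  move=> w' /HK [w'0 Kw']; rewrite He w'0.
  have := Hgt _ Kw'; have := HB _ Kw'.
  set y := A _ => h1 h2; split; nra.
have := Hpos e Heff; rewrite He w0.
have : A (fun i => w (lift ord0 i)) = A r by [].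
rewrite /beta => ->; nra.
Qed.

Lemma dotv_lin n (u u' w : vec n) a b :
  dotv (fun k => a * u k + b * u' k) w = a * dotv u w + b * dotv u' w.
Proof.
rewrite /dotv -!sum_scal -sum_add; apply: sum_ext => k; ring.
Qed.

Lemma dotv_unit n (w : vec n) : dotv (unitv n) w = w ord0.
Proof. by rewrite /dotv /unitv sum_delta. Qed.

Lemma dotv_delta n (w : vec n) j : dotv (fun k => if k == j then 1 else 0) w = w j.
Proof. by rewrite /dotv sum_delta. Qed.

Lemma dotv_scal n (e w : vec n) a : dotv e (fun i => a * w i) = a * dotv e w.
Proof. rewrite /dotv -sum_scal; apply: sum_ext => k; ring. Qed.

Lemma state_nonempty n Om : state_space Om -> exists w0 : vec n, Om w0.
Proof.
move=> [K [_ [_ [[r Kr] HK]]]].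
pose w0 : vec n := fun j => match unlift ord0 j with None => 1 | Some i => r i end.
exists w0; apply/HK; split; first by rewrite /w0 unlift_none.
have -> : (fun i => w0 (lift ord0 i)) = r by apply: functional_extensionality => i; rewrite /w0 liftK.
exact: Kr.
Qed.

Lemma state_bounded n Om : state_space Om -> exists M, 0 <= M /\
  forall w : vec n, Om w -> forall i, Rabs (w (lift ord0 i)) <= M.
Proof.
move=> [K [[_ [M KM]] [_ [_ HK]]]].
exists (Rabs M); split; first by apply Rabs_pos.
move=> w /HK [_ Kw] i; have := KM _ Kw i; have := Rle_abs M; simpl; lra.
Qed.

Lemma state0 n Om (w : vec n) : state_space Om -> Om w -> w ord0 = 1.
Proof. by move=> [K [_ [_ [_ HK]]]] /HK []. Qed.

Arguments state0 {n Om w}.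
Arguments state_nonempty {n Om}.
Arguments state_bounded {n Om}.

Lemma unit_effect n Om : state_space Om -> effect Om (unitv n).
Proof. move=> Hs w Hw; rewrite dotv_unit (state0 Hs Hw); lra. Qed.

Arguments unit_effect {n Om}.

Lemma cone n Om (v : vec n) : state_space Om -> (forall e, effect Om e -> 0 <= dotv e v) ->
  exists lam w, 0 <= lam /\ Om w /\ forall i, v i = lam * w i.
Proof.
move=> Hs Hv.
have hv0 := Hv _ (unit_effect Hs); rewrite dotv_unit in hv0.
case: (Req_dec (v ord0) 0) => [v00|v0n].
  have [w0 Hw0] := state_nonempty Hs.
  exists 0, w0; split; first lra; split => // j; rewrite Rmult_0_l.
  case: (unliftP ord0 j) => [i ->|->] //.
  have [M [M0 HM]] := state_bounded Hs.
  pose c := / (2 * (M + 1)).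
  have cpos : 0 < c by apply: Rinv_0_lt_compat; lra.
  have cM : c * M < 1/2.
    have : c * (2 * (M + 1)) = 1 by rewrite /c; field; lra.
    nra.
  have Heff s : -1 <= s <= 1 -> effect Om (fun k => (1/2) * unitv n k + (s*c) * (if k == lift ord0 i then 1 else 0)).
    move=> hs w' Hw'; rewrite dotv_lin dotv_unit dotv_delta (state0 Hs Hw').
    have hM := HM _ Hw' i.
    have hy := abs_bnd _ _ hM.
    set y := w' _ in hM hy *.
    have : Rabs (s * c * y) <= c * M.
      rewrite !Rabs_mult (Rabs_right c); last lra.
      have := Rabs_pos s; have := Rabs_pos y.
      have : Rabs s <= 1 by apply: Rabs_le; lra.
      move=> h1 h2 h3; have hp : Rabs s * Rabs y <= 1 * M by apply Rmult_le_compat.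
      have -> : Rabs s * c * Rabs y = c * (Rabs s * Rabs y) by ring.
      apply Rmult_le_compat_l; lra.
    move/abs_bnd; lra.
  have h1 := Hv _ (Heff 1 ltac:(lra)); have h2 := Hv _ (Heff (-1) ltac:(lra)).
  rewrite dotv_lin dotv_unit dotv_delta v00 in h1.
  rewrite dotv_lin dotv_unit dotv_delta v00 in h2.
  nra.
have v0p : 0 < v ord0 by lra.
exists (v ord0), (fun i => / v ord0 * v i); split; first lra; split.
  apply: sep => //; first by field.
  move=> e He; rewrite dotv_scal; have := Hv e He; have := Rinv_0_lt_compat _ v0p; nra.
move=> i; field; lra.
Qed.

Definition G (a b : R) : R := if Req_EM_T a 0 then 0 else a * log2 (a / b).

Lemma MI_G (X Y : finType) (p : X -> R) (W : X -> Y -> R) :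
  mutual_info p W = \big[Rplus/0]_(x : X) \big[Rplus/0]_(y : Y)
     G (p x * W x y) (p x * \big[Rplus/0]_(x' : X) (p x' * W x' y)).
Proof. by []. Qed.

Lemma G0 b : G 0 b = 0.
Proof. by rewrite /G; case: (Req_EM_T 0 0). Qed.

Lemma G_scal mu a b : 0 <= mu -> G (mu * a) (mu * b) = mu * G a b.
Proof.
move=> hmu; case: (Req_dec mu 0) => [->|hmu0].
  by rewrite !Rmult_0_l G0.
case: (Req_dec a 0) => [a0|ha].
  by rewrite a0 Rmult_0_r !G0 Rmult_0_r.
rewrite /G; destruct (Req_EM_T a 0) as [h|hh]; first by [].
destruct (Req_EM_T (mu * a) 0) as [h|hh2]; first by exfalso; have := Rmult_integral _ _ h; tauto.
have -> : mu * a / (mu * b) = a / b.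
  rewrite /Rdiv Rinv_mult.
  have -> : mu * a * (/ mu * / b) = (mu * / mu) * (a * / b) by ring.
  by rewrite Rinv_r // Rmult_1_l.
simpl.
ring.
Qed.

Lemma ln2_pos : 0 < ln 2.
Proof. have := ln_lt_2; lra. Qed.

Lemma G_term a b A B : 0 <= a -> 0 <= b -> (0 < a -> 0 < b) -> 0 < A -> 0 < B ->
  (a * ln (A/B) + a + (- (A/B)) * b) / ln 2 <= G a b.
Proof.
move=> ha hb hab hA hB; have l2 := ln2_pos.
case: (Req_dec a 0) => [a0|an0].
  rewrite a0 G0.
  have : 0 <= A / B by apply: Rlt_le; apply: Rdiv_lt_0_compat.
  move=> hAB; apply: (Rmult_le_reg_r (ln 2)); first exact: ln2_pos.
  rewrite Rmult_0_l /Rdiv Rmult_assoc Rinv_l; last lra.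
  have : 0 <= A * / B * b by apply: Rmult_le_pos => //.
  rewrite /Rdiv in hAB; lra.
have apos : 0 < a by lra.
have bpos := hab apos.
rewrite /G; destruct (Req_EM_T a 0) as [h|hh]; first by [].
pose t := (A * b) / (B * a).
have tpos : 0 < t by apply: Rdiv_lt_0_compat; apply: Rmult_lt_0_compat.
have hlt := ln_le t tpos.
have AB : 0 < A / B by apply: Rdiv_lt_0_compat.
have eab : a / b = (A / B) * / t by rewrite /t; field; repeat split; lra.
have lnab : ln (a / b) = ln (A / B) - ln t.
  rewrite eab ln_mult //; last by apply: Rinv_0_lt_compat.
  rewrite ln_Rinv //; ring.
have at1 : a * t = A / B * b by rewrite /t; field; lra.
have key : a * ln (A / B) + a + - (A / B) * b <= a * ln (a / b).
  rewrite lnab; nra.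
rewrite /log2.
apply: (Rmult_le_reg_r (ln 2)); first exact: l2.
have -> : (a * ln (A / B) + a + - (A / B) * b) / ln 2 * ln 2 = a * ln (A / B) + a + - (A / B) * b
  by field; lra.
have -> : a * (ln (a / b) / ln 2) * ln 2 = a * ln (a / b) by field; lra.
exact: key.
Qed.

Lemma logsum (I : finType) (a b : I -> R) :
  (forall i, 0 <= a i) -> (forall i, 0 <= b i) -> (forall i, 0 < a i -> 0 < b i) ->
  G (\big[Rplus/0]_(i : I) a i) (\big[Rplus/0]_(i : I) b i) <= \big[Rplus/0]_(i : I) G (a i) (b i).
Proof.
move=> ha hb hab.
set A := \big[Rplus/0]_(i : I) a i; set B := \big[Rplus/0]_(i : I) b i.
have A0 : 0 <= A by apply: sum_ge0.
case: (Req_dec A 0) => [Az|Anz].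
  rewrite Az G0; apply: sum_ge0 => i.
  have : a i <= A by apply: sum_term.
  have := ha i => h1 h2; have -> : a i = 0 by lra.
  rewrite G0; lra.
have Apos : 0 < A by lra.
have [j hj] : exists j, 0 < a j.
  apply: NNPP => hn; apply: Anz; rewrite /A big1 // => i _.
  have := ha i; case: (Req_dec (a i) 0) => // h1 h2; exfalso; apply: hn; exists i; lra.
have Bpos : 0 < B by have := hab j hj; have := @sum_term _ b j hb; rewrite -/B; lra.
apply: (Rle_trans _ _ _ _ (@sum_le I _ _ (fun i => G_term _ _ _ _ (ha i) (hb i) (hab i) Apos Bpos))).
have -> : \big[Rplus/0]_(i : I) ((a i * ln (A / B) + a i + - (A / B) * b i) / ln 2) =
          / ln 2 * (\big[Rplus/0]_(i : I) (a i * ln (A / B) + 1 * a i + - (A / B) * b i)).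
  rewrite -sum_scal; apply: sum_ext => i; rewrite /Rdiv; ring.
rewrite sum_lin3 -/B.
have -> : \big[Rplus/0]_(i : I) (a i * ln (A / B)) = A * ln (A / B)
  by rewrite /A; rewrite -big_distrl.
rewrite -/A /G; destruct (Req_EM_T A 0) as [h|hh]; first by [].
simpl; rewrite /log2; right; have := ln2_pos; move=> l2; field; lra.
Qed.

Definition colv nA nB (Psi : mat nA nB) (f : vec nB) : vec nA :=
  fun i => \big[Rplus/0]_(j < nB.+1) (Psi i j * f j).
Arguments colv {nA nB}.

Lemma dotm_tens nA nB (e : vec nA) (f : vec nB) (Psi : mat nA nB) :
  dotm (tens e f) Psi = dotv e (colv Psi f).
Proof.
rewrite /dotm /dotv; apply: sum_ext => i; rewrite /colv -sum_scal; apply: sum_ext => j.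
rewrite /tens; ring.
Qed.

Lemma colv_applyA nA nB (T : lmap nA) (Psi : mat nA nB) (f : vec nB) i :
  colv (applyA T Psi) f i = applyv T (colv Psi f) i.
Proof.
rewrite /colv /applyA /applyv.
rewrite (@sum_ext _ _ (fun j => \big[Rplus/0]_(k < nA.+1) (T i k * Psi k j * f j))); last first.
  by move=> j; rewrite big_distrl.
rewrite exchange_big /=; apply: sum_ext => k; rewrite -sum_scal; apply: sum_ext => j; ring.
Qed.

Lemma dotm_decoding nA nB (Z Y1 Y2 : finType) (q : Z -> R) (e : Z -> Y1 -> vec nA)
  (f : Z -> Y2 -> vec nB) y1 y2 (Psi : mat nA nB) :
  dotm (decoding q e f y1 y2) Psi = \big[Rplus/0]_(z : Z) (q z * dotm (tens (e z y1) (f z y2)) Psi).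
Proof.
rewrite /dotm /decoding.
under eq_bigr do rewrite -sum_scal.
rewrite [in RHS]exchange_big /=; apply: sum_ext => i.
under [in RHS]eq_bigr do rewrite -sum_scal.
rewrite [in RHS]exchange_big /=; apply: sum_ext => j.
rewrite big_distrl /=; apply: sum_ext => z; rewrite /tens; ring.
Qed.

Lemma dotv_ext n (e u u' : vec n) : (forall i, u i = u' i) -> dotv e u = dotv e u'.
Proof. by move=> H; apply: sum_ext => i; rewrite H. Qed.

Lemma applyv_ext n (T : lmap n) (u u' : vec n) i : (forall i, u i = u' i) -> applyv T u i = applyv T u' i.
Proof. by move=> H; apply: sum_ext => k; rewrite H. Qed.

Lemma applyv_scal n (T : lmap n) (w : vec n) lam i :
  applyv T (fun j => lam * w j) i = lam * applyv T w i.
Proof. rewrite /applyv -sum_scal; apply: sum_ext => k; ring. Qed.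

Lemma dotm_unit nA nB (Psi : mat nA nB) : dotm (tens (unitv nA) (unitv nB)) Psi = Psi ord0 ord0.
Proof.
rewrite dotm_tens dotv_unit /colv.
rewrite (@sum_ext _ _ (fun j => (if j == ord0 then 1 else 0) * Psi ord0 j)); last first.
  by move=> j; rewrite Rmult_comm.
exact: sum_delta.
Qed.

Lemma MI_reindex (X Y X' Y' : finType) (g : X' -> X) (h : Y' -> Y) (p : X -> R) (W : X -> Y -> R) :
  bijective g -> bijective h ->
  mutual_info (fun k => p (g k)) (fun k l => W (g k) (h l)) = mutual_info p W.
Proof.
move=> bg bh; rewrite !MI_G.
rewrite [in RHS](reindex g) /=; last exact: onW_bij.
apply: sum_ext => k.
rewrite [in RHS](reindex h) /=; last exact: onW_bij.
apply: sum_ext => l.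
by rewrite [in RHS](reindex g) /=; last exact: onW_bij.
Qed.

Lemma rate_in (X Y : finType) n Om (p : X -> R) (om : X -> vec n) (e : Y -> vec n) :
  prob_dist p -> (forall x, Om (om x)) -> measurement Om e ->
  classical_rates Om (mutual_info p (fun x y => dotv (e y) (om x))).
Proof.
move=> [p0 p1] Hom [He1 He2].
exists #|X|, #|Y|, (fun k => p (enum_val k)), (fun k => om (enum_val k)), (fun l => e (enum_val l)).
split; [split|split; [|split; [split|]]].
- by move=> k; apply: p0.
- by rewrite -p1 [in RHS](reindex (@enum_val X predT)) //=; apply: onW_bij; apply: enum_val_bij.
- by move=> k; apply: Hom.
- by move=> l; apply: He1.
- move=> i; rewrite -He2 [in RHS](reindex (@enum_val Y predT)) //=; apply: onW_bij; apply: enum_val_bij.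
- rewrite -(@MI_reindex _ _ _ _ (@enum_val X predT) (@enum_val Y predT) p) //; exact: enum_val_bij.
Qed.
Arguments cone {n Om}.
Arguments rate_in {X Y n Om p om e}.

Lemma rearr (X Y1 Y2 Z : finType) (F : X -> Y1 -> Y2 -> Z -> R) :
  \big[Rplus/0]_(x : X) \big[Rplus/0]_(y : Y1 * Y2) \big[Rplus/0]_(z : Z) F x y.1 y.2 z =
  \big[Rplus/0]_(z : Z) \big[Rplus/0]_(y2 : Y2) \big[Rplus/0]_(x : X) \big[Rplus/0]_(y1 : Y1) F x y1 y2 z.
Proof.
transitivity (\big[Rplus/0]_(x : X) \big[Rplus/0]_(y1 : Y1) \big[Rplus/0]_(y2 : Y2) \big[Rplus/0]_(z : Z) F x y1 y2 z).
  apply: sum_ext => x; exact: (esym (pair_bigA _ (fun y1 y2 => \big[Rplus/0]_(z : Z) F x y1 y2 z))).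
transitivity (\big[Rplus/0]_(x : X) \big[Rplus/0]_(z : Z) \big[Rplus/0]_(y2 : Y2) \big[Rplus/0]_(y1 : Y1) F x y1 y2 z).
  apply: sum_ext => x.
  under eq_bigr do rewrite exchange_big /=.
  rewrite exchange_big /=; apply: sum_ext => z; exact: exchange_big.
rewrite exchange_big /=; apply: sum_ext => z; exact: exchange_big.
Qed.

Lemma arith2 mu px Pv S : 0 <= mu -> 0 < px -> 0 <= Pv -> px * Pv <= S ->
  0 < mu * (px * Pv) -> 0 < mu * (px * S).
Proof.
move=> h1 h2 h3 h4 h5.
have h6 : px * (px * Pv) <= px * S by apply: Rmult_le_compat_l; lra.
have h7 : mu * (px * (px * Pv)) <= mu * (px * S) by apply: Rmult_le_compat_l.
have h8 : 0 < px * (mu * (px * Pv)) by apply: Rmult_lt_0_compat.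
have : mu * (px * (px * Pv)) = px * (mu * (px * Pv)) by ring.
lra.
Qed.
Arguments arith2 {mu px Pv S}.

Theorem proposition5 (nA nB : nat) (OmA : vec nA -> Prop) (OmB : vec nB -> Prop)
  (OmAB : mat nA nB -> Prop) (X Y1 Y2 Z : finType)
  (phi : mat nA nB) (p : X -> R) (T : X -> lmap nA)
  (q : Z -> R) (e : Z -> Y1 -> vec nA) (f : Z -> Y2 -> vec nB) :
  state_space OmA -> state_space OmB ->
  closed_mat OmAB -> convex_mat OmAB ->
  (forall psi, min_tensor OmA OmB psi -> OmAB psi) ->
  (forall psi, OmAB psi -> max_tensor OmA OmB psi) ->
  OmAB phi ->
  prob_dist p ->
  (forall x, allowed_local OmA OmAB (T x)) ->
  prob_dist q ->
  (forall z, measurement OmA (e z)) ->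
  (forall z, measurement OmB (f z)) ->
  forall chiC : R, is_lub (classical_rates OmA) chiC ->
  mutual_info p (fun (x : X) (y : (Y1 * Y2)%type) =>
                   dotm (decoding q e f y.1 y.2) (applyA (T x) phi)) <= chiC.
Proof.
move=> HA HB Hcl Hcv Hmin Hmax Hphi Hp HT Hq He Hf chiC [Hub _].
have [phi1 phipos] := Hmax _ Hphi.
have Hc z y2 : exists pr : R * vec nA, 0 <= pr.1 /\ OmA pr.2 /\
    forall i, colv phi (f z y2) i = pr.1 * pr.2 i.
  have [lam [w [h1 [h2 h3]]]] := cone (colv phi (f z y2)) HA
    (fun e0 he0 => eq_ind _ (fun r => 0 <= r) (phipos e0 (f z y2) he0 ((Hf z).1 y2)) _ (dotm_tens _ _ _ _ _)).
  by exists (lam, w).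
pose sel z y2 := proj1_sig (constructive_indefinite_description _ (Hc z y2)).
have Hsel z y2 : 0 <= (sel z y2).1 /\ OmA (sel z y2).2 /\
    forall i, colv phi (f z y2) i = (sel z y2).1 * (sel z y2).2 i :=
  proj2_sig (constructive_indefinite_description _ (Hc z y2)).
pose lam z y2 := (sel z y2).1.
pose wv z y2 := (sel z y2).2.
pose mu z y2 := q z * lam z y2.
pose P z y2 x y1 := dotv (e z y1) (applyv (T x) (wv z y2)).
have lam0 z y2 : 0 <= lam z y2 by case: (Hsel z y2).
have Omw z y2 : OmA (wv z y2) by case: (Hsel z y2) => _ [].
have Hcol z y2 i : colv phi (f z y2) i = lam z y2 * wv z y2 i by case: (Hsel z y2) => _ [].
have mu0 z y2 : 0 <= mu z y2 by apply: Rmult_le_pos => //; apply: (Hq.1).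
have P0 z y2 x y1 : 0 <= P z y2 x y1.
  by have := (He z).1 y1 _ ((HT x).1 _ (Omw z y2)); case.
have p0 := Hp.1.
have HW x y1 y2 : dotm (decoding q e f y1 y2) (applyA (T x) phi) =
    \big[Rplus/0]_(z : Z) (mu z y2 * P z y2 x y1).
  rewrite dotm_decoding; apply: sum_ext => z; rewrite dotm_tens.
  rewrite (@dotv_ext _ _ _ (fun i => lam z y2 * applyv (T x) (wv z y2) i)); last first.
    move=> i; rewrite colv_applyA -applyv_scal; apply: applyv_ext => k; exact: Hcol.
  rewrite dotv_scal /mu /P; ring.
have Hsum_mu : \big[Rplus/0]_(z : Z) \big[Rplus/0]_(y2 : Y2) mu z y2 = 1.
  rewrite -Hq.2; apply: sum_ext => z.
  rewrite /mu sum_scal.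
  suff -> : \big[Rplus/0]_(y2 : Y2) lam z y2 = 1 by ring.
  transitivity (\big[Rplus/0]_(y2 : Y2) colv phi (f z y2) ord0).
    apply: sum_ext => y2; rewrite Hcol (state0 HA (Omw z y2)) //; ring.
  rewrite /colv exchange_big /=.
  rewrite (@sum_ext _ _ (fun j => (if j == ord0 then 1 else 0) * phi ord0 j)).
    by rewrite sum_delta -dotm_unit.
  move=> j; rewrite sum_scal (Hf z).2 /unitv; exact: Rmult_comm.
have Hrate z y2 : mutual_info p (P z y2) <= chiC.
  apply: Hub; exact: (rate_in Hp (fun x => (HT x).1 _ (Omw z y2)) (He z)).
pose Fm x y1 y2 z := mu z y2 * G (p x * P z y2 x y1)
   (p x * \big[Rplus/0]_(x' : X) (p x' * P z y2 x' y1)).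
rewrite MI_G.
apply: (Rle_trans _ (\big[Rplus/0]_(x : X) \big[Rplus/0]_(y : Y1 * Y2)
            \big[Rplus/0]_(z : Z) Fm x y.1 y.2 z)).
  apply: sum_le => x; apply: sum_le => -[y1 y2] /=.
  have E1 : p x * dotm (decoding q e f y1 y2) (applyA (T x) phi) =
      \big[Rplus/0]_(z : Z) (mu z y2 * (p x * P z y2 x y1)).
    rewrite HW -sum_scal; apply: sum_ext => z; ring.
  have E2 : p x * \big[Rplus/0]_(x' : X) (p x' * dotm (decoding q e f y1 y2) (applyA (T x') phi)) =
      \big[Rplus/0]_(z : Z) (mu z y2 * (p x * \big[Rplus/0]_(x' : X) (p x' * P z y2 x' y1))).
    rewrite (@sum_ext _ _ (fun x' => \big[Rplus/0]_(z : Z) (p x' * (mu z y2 * P z y2 x' y1)))); last first.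
      by move=> x'; rewrite HW sum_scal.
    rewrite exchange_big /= -sum_scal; apply: sum_ext => z.
    rewrite (@sum_ext _ _ (fun x' => mu z y2 * (p x' * P z y2 x' y1))); last by move=> x'; ring.
    rewrite sum_scal; ring.
  rewrite E1 E2.
  apply: Rle_trans; first apply: logsum.
  - move=> z; apply: Rmult_le_pos => //; apply: Rmult_le_pos => //.
  - move=> z; apply: Rmult_le_pos => //; apply: Rmult_le_pos => //; apply: sum_ge0 => x'.
    by apply: Rmult_le_pos.
  - move=> z hz.
    have hs : p x * P z y2 x y1 <= \big[Rplus/0]_(x' : X) (p x' * P z y2 x' y1) :=
      @sum_term _ (fun x' => p x' * P z y2 x' y1) x (fun x' => Rmult_le_pos _ _ (p0 x') (P0 z y2 x' y1)).
    have h1 := mu0 z y2; have h2 := p0 x; have h3 := P0 z y2 x y1.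
    have hpx : 0 < p x.
      case: (Rle_lt_or_eq_dec _ _ h2) => // hpx0; rewrite -hpx0 in hz; lra.
    exact: (arith2 h1 hpx h3 hs hz).
  right; apply: sum_ext => z; rewrite G_scal //.
rewrite rearr.
apply: (Rle_trans _ (\big[Rplus/0]_(z : Z) \big[Rplus/0]_(y2 : Y2) (mu z y2 * chiC))).
  apply: sum_le => z; apply: sum_le => y2.
  rewrite (@sum_ext _ _ (fun x => mu z y2 * \big[Rplus/0]_(y1 : Y1) G (p x * P z y2 x y1)
        (p x * \big[Rplus/0]_(x' : X) (p x' * P z y2 x' y1)))); last first.
    by move=> x; rewrite -sum_scal.
  rewrite sum_scal -MI_G.
  apply: Rmult_le_compat_l => //.
right.
rewrite (@sum_ext _ _ (fun z => chiC * \big[Rplus/0]_(y2 : Y2) mu z y2)); last first.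
  by move=> z; rewrite -sum_scal; apply: sum_ext => y2; ring.
rewrite sum_scal Hsum_mu; ring.
Qed.
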